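(* Let $\mathcal{D}=(\mathcal{P},\mathcal{B},\mathcal{I})$ be a $(v,b,r,k,\lambda_1,0)$ SPBIBD of type $(k-1,t)$ with $0<t<k$, and let $\Gamma$ be its incidence graph. Then every vertex $p\in\mathcal{P}$ is distance-regularized. Moreover, $\Gamma$ is distance-semiregular with respect to $\mathcal{P}$ with intersection numbers $c_0=0,\ c_1=1,\ c_2=\lambda_1,\ c_3=t,\ c_4=r$; $b_0=r,\ b_1=k-1,\ b_2=r-\lambda_1,\ b_3=k-t,\ b_4=0$.
   Context: A design $\mathcal{D}=(\mathcal{P},\mathcal{B},\mathcal{I})$ is an incidence structure with $|\mathcal{P}|=v$, $|\mathcal{B}|=b$, every block incident with exactly $k$ points and every point with exactly $r$ blocks; standing assumptions: $v>k$ and $r<b$. $(p,B)$ is a flag if $p\in B$, a non-flag otherwise. $\mathcal{D}$ is a $(v,b,r,k,\lambda_1,\lambda_2)$ SPBIBD of type $(s,t)$ if (i) any two distinct points are together in exactly $\lambda_1$ or exactly $\lambda_2$ blocks; (ii) for every flag $(p,B)$, the number of points of $B$ other than $p$ lying with $p$ in exactly $\lambda_1$ blocks is $s$; (iii) for every non-flag $(p,B)$, the number of points of $B$ lying with $p$ in exactly $\lambda_1$ blocks is $t$. The incidence graph is the bipartite graph on $\mathcal{P}\cup\mathcal{B}$ with $p\sim B$ iff $p\in B$. For a connected graph, $\Gamma_i(u)$ is the set of vertices at distance $i$ from $u$, $\Gamma(u)=\Gamma_1(u)$, $\varepsilon(u)$ the eccentricity. For $w\in\Gamma_i(u)$, $b_i(u,w)=|\Gamma_{i+1}(u)\cap\Gamma(w)|$,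 $c_i(u,w)=|\Gamma_{i-1}(u)\cap\Gamma(w)|$, $a_i(u,w)=|\Gamma_i(u)\cap\Gamma(w)|$. $u$ is distance-regularized if for each $0\le i\le\varepsilon(u)$ these do not depend on $w\in\Gamma_i(u)$. A connected $(Y,Y')$-bipartite graph is distance-semiregular with respect to $Y$ if every vertex of $Y$ is distance-regularized with the same numbers $b_i, c_i$ (i.e. $b_i(x,w)=b_i$, $c_i(x,w)=c_i$ for all $x\in Y$, $w\in\Gamma_i(x)$). *)

(* Defs.v *)
From mathcomp Require Import all_boot.
Set Implicit Arguments.
Unset Strict Implicit.
Unset Printing Implicit Defensive.

Section Designs.
Variables (P B : finType) (I : P -> B -> bool).

Definition is_design (v b r k : nat) : Prop :=
  #|P| = v /\ #|B| = b /\
  (forall bl : B, #|[set p | I p bl]| = k) /\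
  (forall p : P, #|[set bl | I p bl]| = r) /\
  k < v /\ r < b.

Definition lam (p q : P) : nat := #|[set bl | I p bl && I q bl]|.

Definition is_SPBIBD (v b r k l1 l2 s t : nat) : Prop :=
  [/\ is_design v b r k,
      (forall p q : P, p != q -> lam p q = l1 \/ lam p q = l2),
      (forall (p : P) (bl : B), I p bl ->
         #|[set q | (q != p) && I q bl && (lam p q == l1)]| = s) &
      (forall (p : P) (bl : B), ~~ I p bl ->
         #|[set q | I q bl && (lam p q == l1)]| = t)].
End Designs.

Definition inc_adj (P B : finType) (I : P -> B -> bool) : rel (P + B)%type :=
  fun x y => match x, y with
             | inl p, inr bl => I p bl
             | inr bl, inl p => I p bl
             | _, _ => false
             end.

Section Graphs.
Variables (V : finType) (adj : rel V).

Definition nbr (w : V) : {set V} := [set y | adj w y].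

Fixpoint ball (u : V) (n : nat) : {set V} :=
  match n with
  | 0 => [set u]
  | n'.+1 => ball u n' :|: [set y | [exists x in ball u n', adj x y]]
  end.

Definition sphere (u : V) (i : nat) : {set V} :=
  [set w | (w \in ball u i) && ((i == 0) || (w \notin ball u i.-1))].

Definition connected_graph : Prop := forall u w : V, exists n, w \in ball u n.

Definition bnum (u : V) (i : nat) (w : V) : nat := #|sphere u i.+1 :&: nbr w|.
Definition cnum (u : V) (i : nat) (w : V) : nat :=
  if i is 0 then 0 else #|sphere u i.-1 :&: nbr w|.
Definition anum (u : V) (i : nat) (w : V) : nat := #|sphere u i :&: nbr w|.

(* u is distance-regularized (condition vacuous for i > eccentricity) *)
Definition distance_regularized (u : V) : Prop :=
  forall i (w w' : V), w \in sphere u i -> w' \in sphere u i ->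
    [/\ bnum u i w = bnum u i w', cnum u i w = cnum u i w' &
        anum u i w = anum u i w'].

(* distance-semiregular w.r.t. Y with intersection numbers
   bs = [b_0; ...; b_d], cs = [c_0; ...; c_d]: every x in Y has
   eccentricity <= d and b_i(x,w) = b_i, c_i(x,w) = c_i. *)
Definition distance_semiregular (Y : {set V}) (bs cs : seq nat) : Prop :=
  [/\ connected_graph,
      (forall x, x \in Y -> distance_regularized x) &
      (forall x, x \in Y -> forall i (w : V), w \in sphere x i ->
         [/\ i < size bs, bnum x i w = nth 0 bs i & cnum x i w = nth 0 cs i])].
End Graphs.

(* Main.v *)
Require Import Defs.
From mathcomp Require Import all_boot.

Section Gen.
Set Implicit Arguments. Unset Strict Implicit.
Variables (V : finType) (adj : rel V) (u : V) (d : V -> nat).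
Hypothesis d0 : forall w, (d w == 0) = (w == u).
Hypothesis dS : forall x y, adj x y -> d y <= (d x).+1.
Hypothesis dP : forall w, 0 < d w -> exists x, adj x w && (d x == (d w).-1).

Lemma ball_d n : ball adj u n = [set w | d w <= n].
Proof.
elim: n => [|n IH] /=.
  by apply/setP=> w; rewrite !inE leqn0 d0.
apply/setP=> w; rewrite IH !inE.
apply/idP/idP.
- case/orP=> [h|]; first exact: leqW h.
  case/existsP=> x /andP[]; rewrite inE => hx hxw.
  by apply: leq_trans (dS hxw) _; rewrite ltnS.
- rewrite leq_eqVlt ltnS; case/orP=> [/eqP hw|->//]; apply/orP; right.
  have: 0 < d w by rewrite hw.
  case/dP=> x /andP[ax /eqP dx]; apply/existsP; exists x.
  by rewrite inE dx hw /= leqnn ax.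
Qed.

Lemma sphere_d i : sphere adj u i = [set w | d w == i].
Proof.
apply/setP=> w; rewrite /sphere !inE !ball_d !inE.
case: i => [|i] /=; first by rewrite leqn0 andbT.
by rewrite eqn_leq -ltnNge.
Qed.
End Gen.

Lemma ball_trans (V : finType) (adj : rel V) u x w m n :
  x \in ball adj u m -> w \in ball adj x n -> w \in ball adj u (m + n).
Proof.
move=> hx; elim: n w => [|n IH] w /=.
  by rewrite inE => /eqP ->; rewrite addn0.
rewrite addnS /= inE; case/orP=> [h|].
  by rewrite inE IH.
rewrite inE => /existsP [y /andP[hy ay]].
rewrite !inE; apply/orP; right; apply/existsP; exists y.
by rewrite IH.
Qed.

Section Spec.
Set Implicit Arguments. Unset Strict Implicit.
Variables (P B : finType) (I : P -> B -> bool) (v b r k l1 t : nat).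
Hypothesis H : is_SPBIBD I v b r k l1 0 (k - 1) t.
Hypothesis t0 : 0 < t.
Hypothesis tk : t < k.

Lemma cardBk bl : #|[set p | I p bl]| = k.
Proof. by case: H => [[_ [_ [h _]]] _ _ _]. Qed.
Lemma cardPr p : #|[set bl | I p bl]| = r.
Proof. by case: H => [[_ [_ [_ [h _]]]] _ _ _]. Qed.
Lemma rb : r < b.
Proof. by case: H => [[_ [_ [_ [_ [_ h]]]]] _ _ _]. Qed.
Lemma cardB : #|B| = b.
Proof. by case: H => [[_ [h _]] _ _ _]. Qed.
Lemma lamH p q : p != q -> lam I p q = l1 \/ lam I p q = 0.
Proof. by case: H => [_ h _ _]; apply: h. Qed.
Lemma flagH p bl : I p bl -> #|[set q | (q != p) && I q bl && (lam I p q == l1)]| = k - 1.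
Proof. by case: H => [_ _ h _]; apply: h. Qed.
Lemma nflagH p bl : ~~ I p bl -> #|[set q | I q bl && (lam I p q == l1)]| = t.
Proof. by case: H => [_ _ _ h]; apply: h. Qed.

Lemma lam_pos p q bl : I p bl -> I q bl -> lam I p q != 0.
Proof.
move=> hp hq; rewrite -lt0n card_gt0; apply/set0Pn; exists bl.
by rewrite inE hp hq.
Qed.

Lemma lam0 p q bl : I q bl -> lam I p q == 0 -> ~~ I p bl.
Proof.
move=> hq h; apply/negP => hp; by move: (lam_pos hp hq); rewrite h.
Qed.

Lemma exflag : exists p bl, I p bl.
Proof.
have : 0 < #|B| by rewrite cardB; apply: leq_ltn_trans rb.
case/card_gt0P => bl _.
have : 0 < #|[set p | I p bl]| by rewrite cardBk; apply: leq_ltn_trans tk.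
by case/card_gt0P => p; rewrite inE => hp; exists p, bl.
Qed.

Lemma l1pos : 0 < l1.
Proof.
have [p [bl hp]] := exflag.
have : 0 < #|[set q | (q != p) && I q bl && (lam I p q == l1)]|.
  by rewrite (flagH hp) subn_gt0 (leq_ltn_trans _ tk).
case/card_gt0P => q; rewrite inE => /andP[/andP[_ hq] /eqP <-].
by rewrite lt0n (lam_pos hp hq).
Qed.

Lemma rpos : 0 < r.
Proof.
have [p [bl hp]] := exflag.
by rewrite -(cardPr p); apply/card_gt0P; exists bl; rewrite inE.
Qed.

Lemma lam_eq p q : q != p -> (lam I p q == l1) = (lam I p q != 0).
Proof.
move=> qp; have : p != q by rewrite eq_sym.
case/lamH => ->; first by rewrite eqxx -lt0n l1pos.
by rewrite eqxx eq_sym; apply/negbTE; rewrite -lt0n l1pos.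
Qed.

Definition dd (p : P) (x : P + B) : nat :=
  match x with
  | inl q => if q == p then 0 else if lam I p q == 0 then 4 else 2
  | inr bl => if I p bl then 1 else 3
  end.

Lemma dd_le4 p x : dd p x <= 4.
Proof. by case: x => [q|bl] /=; repeat case: ifP. Qed.

Lemma dd0 p w : (dd p w == 0) = (w == inl p).
Proof.
case: w => [q|bl] /=; last by case: ifP.
case: (eqVneq q p) => [->|qp]; first by rewrite !eqxx.
have -> : (inl q == inl p :> P + B) = false.
  by apply/eqP => -[e]; rewrite e eqxx in qp.
by case: ifP.
Qed.

Lemma ddS p x y : inc_adj I x y -> dd p y <= (dd p x).+1.
Proof.
case: x => [q|bl]; case: y => [q'|bl'] //= h.
  case: (eqVneq q p) => [e|qp]; first by rewrite -e h.
  by repeat case: ifP.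
case hp: (I p bl); last by repeat case: ifP.
case: ifP => // _; case: ifP => // /eqP e.
by move: (lam_pos hp h); rewrite e.
Qed.

Lemma ddP p w : 0 < dd p w -> exists x, inc_adj I x w && (dd p x == (dd p w).-1).
Proof.
case: w => [q|bl] /=.
  case: (eqVneq q p) => [//|qp] _.
  case: ifP => l0.
    have : 0 < #|[set bl | I q bl]| by rewrite cardPr rpos.
    case/card_gt0P => bl; rewrite inE => hq.
    by exists (inr bl); rewrite /= hq (negbTE (lam0 hq l0)).
  have : 0 < lam I p q by rewrite lt0n l0.
  case/card_gt0P => bl; rewrite inE => /andP[hp hq].
  by exists (inr bl); rewrite /= hq hp.
case: ifP => hp _.
  by exists (inl p); rewrite /= hp eqxx.
have : 0 < #|[set q | I q bl && (lam I p q == l1)]| by rewrite nflagH ?hp.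
case/card_gt0P => q; rewrite inE => /andP[hq hl].
exists (inl q); rewrite /= hq.
have qp : q != p by apply/eqP => e; subst q; rewrite hq in hp.
by rewrite (negbTE qp); rewrite (lam_eq qp) in hl; rewrite (negbTE hl).
Qed.

Lemma sphE p i : sphere (inc_adj I) (inl p) i = [set w | dd p w == i].
Proof. apply: sphere_d; [exact: dd0 | exact: ddS | exact: ddP]. Qed.

Lemma ballE p n : ball (inc_adj I) (inl p) n = [set w | dd p w <= n].
Proof. apply: ball_d; [exact: dd0 | exact: ddS | exact: ddP]. Qed.

End Spec.

Section Main.
Set Implicit Arguments. Unset Strict Implicit.
Variables (P B : finType) (I : P -> B -> bool) (v b r k l1 t : nat).
Hypothesis H : is_SPBIBD I v b r k l1 0 (k - 1) t.
Hypothesis t0 : 0 < t.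
Hypothesis tk : t < k.

Lemma cardInr (S : {set P + B}) (Q : pred B) :
  (forall bl, (inr bl \in S) = Q bl) -> (forall q, inl q \notin S) ->
  #|S| = #|[set bl | Q bl]|.
Proof.
move=> h1 h2; have inj : injective (@inr P B) by move=> x y [].
have -> : S = inr @: [set bl | Q bl].
  apply/setP => -[q|bl]; last by rewrite h1 mem_imset // inE.
  by rewrite (negbTE (h2 q)); apply/esym/imsetP => -[x _].
by rewrite card_imset.
Qed.

Lemma cardInl (S : {set P + B}) (Q : pred P) :
  (forall q, (inl q \in S) = Q q) -> (forall bl, inr bl \notin S) ->
  #|S| = #|[set q | Q q]|.
Proof.
move=> h1 h2; have inj : injective (@inl P B) by move=> x y [].
have -> : S = inl @: [set q | Q q].
  apply/setP => -[q|bl]; first by rewrite h1 mem_imset // inE.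
  by rewrite (negbTE (h2 bl)); apply/esym/imsetP => -[x _].
by rewrite card_imset.
Qed.

Lemma anum0 p x :
  #|[set w | dd I p w == dd I p x] :&: nbr (inc_adj I) x| = 0.
Proof.
apply/eqP; rewrite cards_eq0; apply/eqP/setP => y; rewrite !inE.
by case: x => [q|bl]; case: y => [q'|bl'] /=; rewrite ?andbF //; repeat case: ifP.
Qed.

Lemma main p i w : w \in sphere (inc_adj I) (inl p) i ->
  [/\ i < 5, bnum (inc_adj I) (inl p) i w = nth 0 [:: r; k - 1; r - l1; k - t; 0] i,
      cnum (inc_adj I) (inl p) i w = nth 0 [:: 0; 1; l1; t; r] i &
      anum (inc_adj I) (inl p) i w = 0].
Proof.
rewrite (sphE H t0 tk) inE => /eqP <-.
rewrite /bnum /cnum /anum !(sphE H t0 tk) anum0 ltnS dd_le4.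
case: w => [q|bl].
  case: (eqVneq q p) => [->|qp].
    rewrite /= eqxx /=; split => //.
    rewrite (@cardInr _ (fun bl => I p bl)); idtac.
  exact: (cardPr H p).
      by move=> bl; rewrite !inE /=; case: (I p bl).
    by move=> q0; rewrite !inE /= andbF.
  rewrite /= (negbTE qp); case: ifP => l0 /=.
    split => //.
      apply/eqP; rewrite cards_eq0; apply/eqP/setP => y; rewrite !inE.
      have hy : dd I p y != 5 by rewrite neq_ltn ltnS dd_le4.
      by rewrite (negbTE hy).
    rewrite (@cardInr _ (fun bl => I q bl)); first exact: (cardPr H q).
      move=> bl; rewrite !inE /=.
      case hq: (I q bl); last by rewrite andbF.
      by rewrite (negbTE (lam0 hq l0)).
    by move=> q0; rewrite !inE /= andbF.
  have hl : lam I p q = l1 by apply/eqP; rewrite (lam_eq H t0 tk qp) l0.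
  split => //.
    rewrite (@cardInr _ (fun bl => I q bl && ~~ I p bl)).
        have := cardsID [set bl | I p bl] [set bl | I q bl].
        rewrite (cardPr H q).
        have -> : [set bl | I q bl] :&: [set bl | I p bl] = [set bl | I p bl && I q bl].
          by apply/setP => x; rewrite !inE andbC.
        have -> : [set bl | I q bl] :\: [set bl | I p bl] = [set bl | I q bl && ~~ I p bl].
          by apply/setP => x; rewrite !inE andbC.
        by move=> <-; rewrite -hl /lam addKn.
      by move=> bl; rewrite !inE /=; case: (I p bl) => /=; rewrite ?andbT ?andbF.
    by move=> q0; rewrite !inE /= andbF.
  rewrite (@cardInr _ (fun bl => I p bl && I q bl)); first exact: hl.
    by move=> bl; rewrite !inE /=; case: (I p bl).
  by move=> q0; rewrite !inE /= andbF.
rewrite /=; case hp: (I p bl) => /=.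
  split => //.
    rewrite (@cardInl _ (fun q => (q != p) && I q bl && (lam I p q == l1))).
        exact: (flagH H hp).
      move=> q; rewrite !inE /=.
      case: (eqVneq q p) => [->|qp] //=.
      case hq: (I q bl); rewrite ?andbF ?andbT //.
      by rewrite (lam_eq H t0 tk qp) (negbTE (lam_pos hp hq)).
    by move=> bl'; rewrite !inE /= andbF.
  rewrite (@cardInl _ (fun q => q == p)).
      have -> : [set q | q == p] = [set p] by apply/setP => x; rewrite !inE.
      by rewrite cards1.
    move=> q; rewrite !inE /=.
    case: (eqVneq q p) => [->|qp] /=; first by rewrite hp.
    by case: ifP.
  by move=> bl'; rewrite !inE /= andbF.
split => //.
  rewrite (@cardInl _ (fun q => I q bl && ~~ (lam I p q == l1))).
      have := cardsID [set q | lam I p q == l1] [set q | I q bl].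
      rewrite (cardBk H bl).
      have -> : [set q | I q bl] :&: [set q | lam I p q == l1] = [set q | I q bl && (lam I p q == l1)].
        by apply/setP => x; rewrite !inE.
      have -> : [set q | I q bl] :\: [set q | lam I p q == l1] = [set q | I q bl && ~~ (lam I p q == l1)].
        by apply/setP => x; rewrite !inE andbC.
      by rewrite (nflagH H (negbT hp)) => <-; rewrite addKn.
    move=> q; rewrite !inE /=.
    case hq: (I q bl); rewrite ?andbF ?andbT //.
    have qp : q != p by apply/eqP => e; move: hq; rewrite e hp.
    rewrite (negbTE qp) (lam_eq H t0 tk qp) negbK.
    by case: (lam I p q == 0).
  by move=> bl'; rewrite !inE /= andbF.
rewrite (@cardInl _ (fun q => I q bl && (lam I p q == l1))).
    exact: (nflagH H (negbT hp)).
  move=> q; rewrite !inE /=.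
  case hq: (I q bl); rewrite ?andbF ?andbT //.
  have qp : q != p by apply/eqP => e; move: hq; rewrite e hp.
  rewrite (negbTE qp) (lam_eq H t0 tk qp).
  by case: (lam I p q == 0).
by move=> bl'; rewrite !inE /= andbF.
Qed.

End Main.

Theorem lemma4p2 (P B : finType) (I : P -> B -> bool)
  (v b r k l1 t : nat) :
  is_SPBIBD I v b r k l1 0 (k - 1) t ->
  0 < t -> t < k ->
  (forall p : P, distance_regularized (inc_adj I) (inl p)) /\
  distance_semiregular (inc_adj I) [set x | if x is inl _ then true else false]
    [:: r; k - 1; r - l1; k - t; 0]
    [:: 0; 1; l1; t; r].
Proof.
move=> H t0 tk.
have DR : forall p : P, distance_regularized (inc_adj I) (inl p).
  move=> p i w w' hw hw'.
  have [_ b1 c1 a1] := main H t0 tk hw.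
  have [_ b2 c2 a2] := main H t0 tk hw'.
  by rewrite b1 b2 c1 c2 a1 a2.
split => //; split.
- move=> u w; case: u => [p|bl].
    by exists 4; rewrite (ballE H t0 tk) inE dd_le4.
  have : 0 < #|[set p | I p bl]| by rewrite (cardBk H bl); apply: leq_ltn_trans tk.
  case/card_gt0P => p; rewrite inE => hp.
  exists (1 + 4); apply: (@ball_trans _ _ _ (inl p)).
    rewrite /= inE; apply/orP; right; rewrite inE; apply/existsP; exists (inr bl).
    by rewrite inE eqxx /= hp.
  by rewrite (ballE H t0 tk) inE dd_le4.
- by move=> x; case: x => [p|bl]; rewrite inE.
- move=> x; case: x => [p|bl]; rewrite inE // => _ i w hw.
  by have [h1 h2 h3 _] := main H t0 tk hw; split.
Qed.
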